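(* Let $f:\mathbb{R}^d\to\mathbb{R}$ be twice differentiable with $f^*:=\sup_\theta f(\theta)$, $f(\theta)<f^*$ for all $\theta$, $L_1$ non-uniform smooth, and satisfying the reversed Łojasiewicz inequality $\|\nabla f(\theta)\|_2\le\nu[f^*-f(\theta)]$ with $\nu>0$. Fix $h\in(0,1)$, $\eta_{\max}>0$ and a point $\theta_t$. Then the exact backtracking procedure from $\eta_{\max}$ with the Armijo condition on the log-loss $$\ln(f^*-f(\theta_t+\eta_t\nabla f(\theta_t)))\le\ln(f^*-f(\theta_t))-h\,\eta_t\frac{\|\nabla f(\theta_t)\|_2^2}{f^*-f(\theta_t)}$$ terminates and returns a step-size $$\eta_t\ge\min\Big\{\eta_{\max},\ \frac{2(1-h)}{L_1\nu\,[f^*-f(\theta_t)]}\Big\}.$$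
   Context: $f$ is $L_1$ non-uniform smooth: $|f(\theta)-f(\theta')-\langle\nabla f(\theta'),\theta-\theta'\rangle|\le\frac{L_1\|\nabla f(\theta')\|_2}{2}\|\theta-\theta'\|_2^2$ for all $\theta,\theta'$. Exact backtracking returns the largest step-size in $(0,\eta_{\max}]$ satisfying the condition. *)

(* Defs.v *)
From HB Require Import structures.
From mathcomp Require Import all_boot all_order all_algebra.
From mathcomp Require Import all_classical all_reals all_analysis.
Set Implicit Arguments. Unset Strict Implicit. Unset Printing Implicit Defensive.
Import Order.TTheory GRing.Theory Num.Theory.
Import numFieldNormedType.Exports.
Local Open Scope classical_set_scope.
Local Open Scope ring_scope.

Definition dotv {R : realType} {d : nat} (u v : 'rV[R]_d) : R :=
  \sum_(i < d) u ord0 i * v ord0 i.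
Definition norm2 {R : realType} {d : nat} (u : 'rV[R]_d) : R :=
  Num.sqrt (dotv u u).

Definition basisv {R : realType} {d : nat} (i : 'I_d) : 'rV[R]_d := delta_mx ord0 i.
Definition grad {R : realType} {d : nat} (f : 'rV[R]_d -> R) (x : 'rV[R]_d) : 'rV[R]_d :=
  \row_(i < d) ('D_(basisv i) f x).

Definition twice_differentiable {R : realType} {d : nat} (f : 'rV[R]_d -> R) : Prop :=
  (forall x, differentiable f x) /\ (forall x, differentiable (grad f) x).

Definition L1_nonuniform_smooth {R : realType} {d : nat} (f : 'rV[R]_d -> R) (L1 : R) : Prop :=
  forall th th' : 'rV[R]_d,
    `| f th - f th' - dotv (grad f th') (th - th') |
      <= L1 * norm2 (grad f th') / 2 * norm2 (th - th') ^+ 2.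

Definition armijo_log {R : realType} {d : nat} (f : 'rV[R]_d -> R) (fstar h : R)
    (th : 'rV[R]_d) (eta : R) : Prop :=
  ln (fstar - f (th + eta *: grad f th))
    <= ln (fstar - f th) - h * eta * (norm2 (grad f th) ^+ 2 / (fstar - f th)).

(* Main.v *)
Require Import Defs.
From HB Require Import structures.
From mathcomp Require Import all_boot all_order all_algebra.
From mathcomp Require Import all_classical all_reals all_analysis.
From mathcomp Require Import ring lra.
Import Order.TTheory GRing.Theory Num.Theory.
Import numFieldNormedType.Exports.
Local Open Scope classical_set_scope.
Local Open Scope ring_scope.

Lemma dotv_ge0 (R : realType) (d : nat) (u : 'rV[R]_d) : 0 <= dotv u u.
Proof. by apply: sumr_ge0 => i _; rewrite -expr2 sqr_ge0. Qed.

Lemma norm2_sq (R : realType) (d : nat) (u : 'rV[R]_d) : norm2 u ^+ 2 = dotv u u.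
Proof. by rewrite /norm2 sqr_sqrtr // dotv_ge0. Qed.

Lemma dotvZr (R : realType) (d : nat) (u v : 'rV[R]_d) (e : R) :
  dotv u (e *: v) = e * dotv u v.
Proof.
rewrite /dotv mulr_sumr; apply: eq_bigr => i _; rewrite mxE; ring.
Qed.

Lemma dotvZ (R : realType) (d : nat) (v : 'rV[R]_d) (e : R) :
  dotv (e *: v) (e *: v) = e ^+ 2 * dotv v v.
Proof.
rewrite /dotv mulr_sumr; apply: eq_bigr => i _; rewrite !mxE; ring.
Qed.

Lemma armijo_small (R : realType) (d : nat) (f : 'rV[R]_d -> R) (fstar L1 nu h : R)
    (th : 'rV[R]_d) (e : R) :
  (forall x, f x < fstar) ->
  0 < L1 -> L1_nonuniform_smooth f L1 ->
  0 < nu -> (forall x, norm2 (grad f x) <= nu * (fstar - f x)) ->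
  0 < h < 1 -> 0 < e -> e <= 2 * (1 - h) / (L1 * nu * (fstar - f th)) ->
  armijo_log f fstar h th e.
Proof.
move=> flt L1p Hs nup Hl /andP[h0 h1] e0 ele.
set g := grad f th.
set D := fstar - f th.
have D0 : 0 < D by rewrite subr_gt0.
have Hsm := Hs (th + e *: g) th.
rewrite (addrC th) addrK dotvZr norm2_sq dotvZ -/g in Hsm.
have G0 : 0 <= norm2 g by rewrite /norm2 sqrtr_ge0.
have GD : norm2 g <= nu * D := Hl th.
set Q := dotv g g in Hsm.
have Q0 : 0 <= Q by apply: dotv_ge0.
set a := fstar - f (th + e *: g).
have a0 : 0 < a by rewrite subr_gt0.
have key : L1 * norm2 g * e <= 2 * (1 - h).
  have H1 : L1 * norm2 g * e <= L1 * (nu * D) * e.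
    by apply: ler_wpM2r; [exact: ltW | apply: ler_wpM2l; [exact: ltW|]].
  rewrite ler_pdivlMr ?mulr_gt0 // in ele.
  apply: le_trans H1 _; by rewrite mulrA mulrC.
have Hlow : - (f (th + e *: g) - f th - e * Q) <= L1 * norm2 g / 2 * (e ^+ 2 * Q).
  move: Hsm; rewrite ler_norml => /andP[H _]; rewrite lerNl.
  by rewrite (addrC th).
have aD : a <= D - h * e * Q.
  rewrite /a /D.
  have : e * Q * (L1 * norm2 g * e) <= e * Q * (2 * (1 - h)).
    by apply: ler_wpM2l => //; rewrite mulr_ge0 // ltW.
  move=> H2. nra.
rewrite /armijo_log -/g -/D -/a norm2_sq -/Q.
have -> : a = D * (1 + (a / D - 1)) by field; rewrite gt_eqF.
rewrite lnM ?posrE //; last by rewrite addrC subrK divr_gt0.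
rewrite lerD2l.
have aD' : a / D <= (D - h * e * Q) / D by apply: ler_wpM2r => //; rewrite invr_ge0 ltW.
have E : (D - h * e * Q) / D = 1 - h * e * (Q / D) by field; rewrite gt_eqF.
rewrite E in aD'.
have aD0 : 0 < a / D by rewrite divr_gt0.
apply: le_trans (le_ln1Dx _) _; lra.
Qed.

Lemma phi_cont (R : realType) (d : nat) (f : 'rV[R]_d -> R) (fstar h : R)
    (th : 'rV[R]_d) (s : R) :
  (forall x, differentiable f x) -> (forall x, f x < fstar) ->
  let phi := fun e : R => ln (fstar - f (th + e *: grad f th)) -
     (ln (fstar - f th) - h * e * (norm2 (grad f th) ^+ 2 / (fstar - f th))) in
  phi x @[x --> s] --> phi s.
Proof.
move=> df flt phi; rewrite /phi.
apply: cvgB; last first.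
  apply: cvgB; first exact: cvg_cst.
  apply: cvgMr_tmp; apply: cvgMl_tmp; exact: cvg_id.
have c1 : {for s, continuous (fun e : R => fstar - f (th + e *: grad f th))}.
  apply: cvgB; first exact: cvg_cst.
  apply: (@continuous_comp _ _ _ (fun e : R => th + e *: grad f th) f).
    apply: cvgD; first exact: cvg_cst.
    apply: cvgZr_tmp; exact: cvg_id.
  exact: differentiable_continuous (df _).
apply: (continuous_comp c1).
apply: continuous_ln; by rewrite subr_gt0.
Qed.

Theorem lemma2 (R : realType) (d : nat) (f : 'rV[R]_d -> R) (fstar L1 nu h etamax : R)
    (th : 'rV[R]_d) :
  twice_differentiable f ->
  fstar = sup [set f x | x in [set: 'rV[R]_d]] ->
  (forall x, f x < fstar) ->
  0 < L1 -> L1_nonuniform_smooth f L1 ->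
  0 < nu -> (forall x, norm2 (grad f x) <= nu * (fstar - f x)) ->
  0 < h < 1 -> 0 < etamax ->
  exists eta : R,
    [/\ 0 < eta <= etamax,
        armijo_log f fstar h th eta,
        (forall e : R, 0 < e <= etamax -> armijo_log f fstar h th e -> e <= eta) &
        Num.min etamax (2 * (1 - h) / (L1 * nu * (fstar - f th))) <= eta].
Proof.
move=> [df _] _ flt L1p Hs nup Hl /andP[h0 h1] etp.
set c := 2 * (1 - h) / (L1 * nu * (fstar - f th)).
have D0 : 0 < fstar - f th by rewrite subr_gt0.
have c0 : 0 < c by rewrite divr_gt0 ?mulr_gt0 // subr_gt0.
set eta0 := Num.min etamax c.
have e00 : 0 < eta0 by rewrite lt_min etp c0.
have e0m : eta0 <= etamax by rewrite ge_min lexx.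
have e0c : eta0 <= c by rewrite ge_min lexx orbT.
set S := [set e | (0 < e <= etamax) /\ armijo_log f fstar h th e].
have S0 : S eta0.
  split; first by rewrite e00 e0m.
  by apply: (@armijo_small R d f fstar L1 nu h th eta0 flt L1p Hs nup Hl) => //; rewrite h0 h1.
have hs : has_sup S.
  split; first by exists eta0.
  by exists etamax => e [/andP[_ ->]].
set s := sup S.
have s0 : eta0 <= s := sup_upper_bound hs S0.
have sm : s <= etamax by apply: ge_sup; [exists eta0 | move=> e [/andP[_ ->]]].
have sp : 0 < s by apply: lt_le_trans s0.
have As : armijo_log f fstar h th s.
  rewrite /armijo_log leNgt; apply/negP => Hgt.
  have Hc := @phi_cont R d f fstar h th s df flt.
  move: Hc => /= Hc.
  have := @cvgr_gt R R (nbhs s) _ _ _ Hc 0.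
  rewrite subr_gt0 => /(_ _ Hgt) /nbhs_ballP [r r0 Hr].
  have [e [/andP[e0 em] Ae] se] := sup_adherent r0 hs.
  have es : e <= s := sup_upper_bound hs (conj (introT andP (conj e0 em)) Ae).
  have : ball s r e.
    rewrite -ball_normE /ball_ /= ger0_norm ?subr_ge0 //; move: se; rewrite -/s => se; lra.
  move/Hr; rewrite /= subr_gt0 => Hlt.
  by move: Ae; rewrite /armijo_log leNgt Hlt.
exists s; split => //.
- by rewrite sp sm.
- by move=> e Pe Ae; exact: (sup_upper_bound hs (conj Pe Ae)).
Qed.
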